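(* Let $I(z)$ be a nonzero homogeneous polynomial solution of degree $d$ of the KZ system over $\mathbb{F}_p$. Then $d\equiv\sum_{j=1}^nM_j\pmod p$.
   Context: Let $p,q$ be primes and $n$ a positive integer with $p>n\ge2$, $p>q$. Fix positive integers $m_1,\dots,m_n<q$; $M_i$ is the least positive integer with $M_i\equiv -m_iq^{-1}\pmod p$. For $i\ne j$ let $\Omega_{ij}$ be the $n\times n$ matrix with only nonzero entries $(\Omega_{ij})_{ii}=-m_j$, $(\Omega_{ij})_{ij}=m_j$, $(\Omega_{ij})_{ji}=m_i$, $(\Omega_{ij})_{jj}=-m_i$. A polynomial solution of the KZ system over $\mathbb{F}_p$ is $I=(I_1,\dots,I_n)\in\mathbb{F}_p[z_1,\dots,z_n]^n$ with $\partial I/\partial z_i=q^{-1}\sum_{j\ne i}\Omega_{ij}I/(z_i-z_j)$ for all $i$ and $\sum_im_iI_i=0$ (computed in $\mathbb{F}_p$). *)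

(* Defs.v *)
From HB Require Import structures.
From mathcomp Require Import all_boot all_order all_algebra.
From mathcomp Require Import fraction.
From mathcomp Require Import mpoly.
Set Implicit Arguments. Unset Strict Implicit. Unset Printing Implicit Defensive.
Import GRing.Theory.
Local Open Scope ring_scope.

Notation polyFp p n := {mpoly 'F_p[n]}.
Notation fracFp p n := {fraction {mpoly 'F_p[n]}}.

Definition Omega (p n : nat) (m : 'I_n -> nat) (i j : 'I_n) : 'M['F_p]_n :=
  \matrix_(a < n, b < n)
    if (a == i) && (b == i) then - (m j)%:R
    else if (a == i) && (b == j) then (m j)%:R
    else if (a == j) && (b == i) then (m i)%:R
    else if (a == j) && (b == j) then - (m i)%:R
    else 0.

Definition Omega_act (p n : nat) (m : 'I_n -> nat) (i j : 'I_n)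
    (I : 'I_n -> polyFp p n) (k : 'I_n) : polyFp p n :=
  \sum_(l < n) Omega p m i j k l *: I l.

Definition KZ_poly_solution (p q n : nat) (m : 'I_n -> nat)
    (I : 'I_n -> polyFp p n) : Prop :=
  (forall i k : 'I_n,
     tofrac (mderiv i (I k)) =
       tofrac (((q%:R : 'F_p)^-1)%:MP) *
       \sum_(j < n | j != i)
          tofrac (Omega_act m i j I k) / tofrac ('X_i - 'X_j))
  /\ \sum_(i < n) (m i)%:R *: I i = 0.

(* Main.v *)
From HB Require Import structures.
From mathcomp Require Import all_boot all_order all_algebra.
From mathcomp Require Import fraction.
From mathcomp Require Import mpoly.
From mathcomp Require Import zify ring.
Import GRing.Theory.
Local Open Scope ring_scope.
Require Import Defs.
Lemma X_mderivX (R : comNzRingType) n (i : 'I_n) (m : 'X_{1..n}) :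
  'X_i * ('X_[m] : {mpoly R[n]})^`M(i) = (m i)%:R *: 'X_[m].
Proof.
rewrite mderivX -scalerAr.
case: (m i =P 0)%N => [->|mi]; first by rewrite !scale0r.
rewrite -mpolyXD; congr (_ *: 'X_[_]); apply/mnmP => l.
rewrite mnmDE mnmBE mnm1E; case: eqP => [<-|_]; lia.
Qed.

Lemma euler (R : comNzRingType) n d (P : {mpoly R[n]}) :
  P \is d.-homog -> \sum_i 'X_i * P^`M(i) = d%:R *: P.
Proof.
move=> /dhomogP hP.
rewrite {1 2}(mpolyE P).
under eq_bigr => i _ do rewrite raddf_sum mulr_sumr.
rewrite exchange_big scaler_sumr big_seq [RHS]big_seq.
apply: eq_bigr => m mP.
under eq_bigr => i _ do rewrite /= mderivZ -scalerAr X_mderivX.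
by rewrite -scaler_sumr -scaler_suml -natr_sum -mdegE hP // scalerA mulrC -scalerA.
Qed.

Lemma sym_sum (F : fieldType) n (x : 'I_n -> F) (a : 'I_n -> 'I_n -> F) :
  (forall i j, i != j -> x i != x j) -> (forall i j, i != j -> a i j = a j i) ->
  let S := \sum_i \sum_(j | j != i) x i * a i j / (x i - x j) in
  S + S = \sum_i \sum_(j | j != i) a i j.
Proof.
move=> hx ha S.
have E : S = \sum_i \sum_(j | j != i) x j * a j i / (x j - x i).
  rewrite /S; under eq_bigr => i _ do rewrite big_mkcond /=.
  rewrite exchange_big /=; apply: eq_bigr => i _.
  by rewrite [RHS]big_mkcond /=; apply: eq_bigr => j _; rewrite eq_sym.
rewrite {2}E /S -big_split /=; apply: eq_bigr => i _.
rewrite -big_split /=; apply: eq_bigr => j ji.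
have ij : i != j by rewrite eq_sym.
rewrite -(ha _ _ ij).
have h1 : x i - x j != 0 by rewrite subr_eq0 hx.
have h2 : x j - x i != 0 by rewrite subr_eq0 hx.
by field; rewrite h1 h2.
Qed.

Lemma Omega_sym p n (m : 'I_n -> nat) i j : i != j -> Omega p m i j = Omega p m j i.
Proof.
move=> ij; apply/matrixP => a b; rewrite !mxE.
have ji : j != i by rewrite eq_sym.
have [->|ai] := eqVneq a i; have [->|bi] := eqVneq b i;
  rewrite ?eqxx ?(negbTE ij) ?(negbTE ji) ?(negbTE ai) ?(negbTE bi) ?andbF ?andbT //=.
Qed.

Lemma sum2 (R : nzRingType) (V : lmodType R) n (I : 'I_n -> V) i j (u v : R) :
  i != j ->
  \sum_l (if l == i then u else if l == j then v else 0) *: I l = u *: I i + v *: I j.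
Proof.
move=> ij; rewrite (bigD1 i) //= eqxx (bigD1 j) /=; last by rewrite eq_sym.
rewrite eq_sym (negbTE ij) eqxx big1 ?addr0 // => l /andP[li lj].
by rewrite (negbTE li) (negbTE lj) scale0r.
Qed.

Lemma Omega_actE p n (m : 'I_n -> nat) i j (I : 'I_n -> polyFp p n) k : i != j ->
  Omega_act m i j I k =
  (if k == i then (m j)%:R *: (I j - I i) else 0) +
  (if k == j then (m i)%:R *: (I i - I j) else 0).
Proof.
move=> ij; rewrite /Omega_act.
have ji : j != i by rewrite eq_sym.
have [->|ki] := eqVneq k i.
  rewrite (negbTE ij) addr0.
  under eq_bigr => l _ do rewrite mxE eqxx /= (negbTE ij) /=.
  by rewrite sum2 // scalerBr scaleNr addrC.
rewrite add0r; have [->|kj] := eqVneq k j.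
  under eq_bigr => l _ do rewrite mxE (negbTE ji) eqxx /=.
  by rewrite sum2 // scalerBr scaleNr.
rewrite big1 // => l _; rewrite mxE (negbTE ki) (negbTE kj) /= scale0r //.
Qed.

Lemma T_sum p n (m : 'I_n -> nat) (I : 'I_n -> polyFp p n) k :
  \sum_(i < n) (m i)%:R *: I i = 0 ->
  \sum_i \sum_(j | j != i) Omega_act m i j I k = (- ((\sum_j (m j)%:R) *: I k)) *+ 2.
Proof.
move=> hs.
under eq_bigr => i _ do under eq_bigr => j ji do [rewrite Omega_actE; last by rewrite eq_sym].
under eq_bigr => i _ do rewrite big_split /=.
rewrite big_split /=.
have U : \sum_(j | j != k) (m j)%:R *: (I j - I k) = - ((\sum_j (m j)%:R) *: I k).
  have -> : - ((\sum_j (m j)%:R) *: I k) = \sum_j (m j)%:R *: (I j - I k).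
    rewrite (eq_bigr (fun j => (m j)%:R *: I j - (m j)%:R *: I k)); last by move=> j _; rewrite scalerBr.
    by rewrite sumrB hs add0r scaler_suml.
  by rewrite [RHS](bigD1 k) //= subrr scaler0 add0r.
rewrite mulr2n; congr (_ + _); rewrite -U.
  rewrite (bigD1 k) //= eqxx [X in _ + X = _]big1 ?addr0 // => i ik.
  by rewrite big1 // => j _; rewrite eq_sym (negbTE ik).
have E : forall i, \sum_(j | j != i) (if k == j then (m i)%:R *: (I i - I j) else 0)
   = if k != i then (m i)%:R *: (I i - I k) else 0.
  move=> i; rewrite -big_mkcondr /=.
  have [ki|] := eqVneq k i.
    by rewrite big_pred0 // => j; rewrite ki [i == j]eq_sym; case: (j == i).
  move=> ki; rewrite (big_pred1 k) // => j; rewrite [k == j]eq_sym.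
  rewrite /=; case: (eqVneq j k) => [jk|_]; rewrite ?andbF ?andbT //. by subst j.
under eq_bigr => i _ do rewrite E.
by rewrite -big_mkcond /=; apply: eq_bigl => i; rewrite eq_sym.
Qed.

Theorem corollary5p5 (p q n : nat) (m M : 'I_n -> nat)
    (I : 'I_n -> {mpoly 'F_p[n]}) (d : nat) :
  prime p -> prime q -> (2 <= n)%N -> (n < p)%N -> (q < p)%N ->
  (forall i, 0 < m i < q)%N ->
  (* M_i is the least positive integer with M_i = - m_i q^{-1} (mod p) *)
  (forall i, 0 < M i)%N ->
  (forall i, (M i)%:R = - (m i)%:R / (q%:R : 'F_p)) ->
  (forall i k, (0 < k)%N -> k%:R = - (m i)%:R / (q%:R : 'F_p) -> (M i <= k)%N) ->
  @KZ_poly_solution p q n m I ->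
  (exists k, I k != 0) ->
  (forall k, I k \is d.-homog) ->
  d = (\sum_(j < n) M j)%N %[mod p].
Proof.
move=> pp qp n2 np qlp hm hM0 hMdef _ [hKZ hsum] [k Ik] hhom.
have Eu := @euler _ _ d (I k) (hhom k).
pose c := tofrac (((q%:R : 'F_p)^-1)%:MP : {mpoly 'F_p[n]}).
pose x i := tofrac ('X_i : {mpoly 'F_p[n]}).
pose a i j := tofrac (Omega_act m i j I k).
have H1 : tofrac (d%:R *: I k) =
   c * \sum_i \sum_(j | j != i) x i * a i j / (x i - x j).
  rewrite -Eu rmorph_sum /= mulr_sumr; apply: eq_bigr => i _.
  rewrite rmorphM /= hKZ mulrCA mulr_sumr; congr (_ * _).
  by apply: eq_bigr => j _; rewrite tofracB mulrA.
have hx : forall i j, i != j -> x i != x j.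
  move=> i j ij; rewrite /x tofrac_eq; apply/eqP => /(congr1 (mcoeff U_(i))).
  by rewrite !mcoeffXU eqxx eq_sym (negbTE ij) => /eqP; rewrite oner_eq0.
have ha : forall i j, i != j -> a i j = a j i.
  by move=> i j ij; rewrite /a /Omega_act Omega_sym.
have H2 := @sym_sum _ _ x a hx ha; simpl in H2.
have H3 : tofrac (d%:R *: I k *+ 2) =
   tofrac ((((q%:R : 'F_p)^-1)%:MP) * ((- ((\sum_j (m j)%:R) *: I k)) *+ 2)).
  rewrite rmorphMn /= H1 mulr2n -mulrDr H2 rmorphM /= -(@T_sum p n m I k hsum) rmorph_sum /=.
  by congr (_ * _); apply: eq_bigr => i _; rewrite rmorph_sum.
move/eqP: H3; rewrite tofrac_eq => /eqP E.
have H4 : ((d%:R *+ 2 : 'F_p) - ((q%:R)^-1 * - (\sum_j (m j)%:R)) *+ 2) *: I k = 0.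
  rewrite scalerBl -(scalerMnl (d%:R : 'F_p) (I k) 2) -(scalerMnl _ (I k) 2) E mul_mpolyC -scalerMnr scalerN scalerA mulrN.
  by rewrite scaleNr subrr.
move/eqP: H4; rewrite scaler_eq0 (negbTE Ik) orbF subr_eq0 => /eqP.
rewrite -(mulr_natr (d%:R : 'F_p) 2) -(mulr_natr (_ * _) 2).
have two : (2%:R : 'F_p) != 0.
  have p2 : (2 < p)%N by apply: leq_ltn_trans n2 np.
  apply/eqP => h; have := congr1 (fun x : 'F_p => nat_of_ord x) (h : (2%:R : 'F_p) = 0%:R).
  by rewrite !val_Fp_nat // mod0n modn_small.
move=> /(mulIf two) Ed.
have EM : ((\sum_(j < n) M j)%N%:R : 'F_p) = (q%:R)^-1 * - (\sum_j (m j)%:R).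
  rewrite natr_sum -sumrN mulr_sumr; apply: eq_bigr => j _.
  by rewrite hMdef mulrC.
have := congr1 (fun x : 'F_p => nat_of_ord x) (etrans Ed (esym EM)).
by rewrite !val_Fp_nat // => ->.
Qed.
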